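(* Let $a,b,c,d>0$. Then \[ \frac12\,\frac{\left(a^{2}d^{2}-b^{2}c^{2}\right)^{2}}{a^{2}d^{2}+b^{2}c^{2}}+\left(a^{2}-b^{2}\right)\left(c^{2}-d^{2}\right)\le (ac-bd)^{2}. \] *)

(* Defs.v *)
From Stdlib Require Import Reals.

(* Main.v *)
Require Import Defs.
From Stdlib Require Import Reals.
From Stdlib Require Import Lra Psatz.
Open Scope R_scope.

Theorem lemma4p4 (a b c d : R) (ha : 0 < a) (hb : 0 < b) (hc : 0 < c) (hd : 0 < d) :
  (1/2) * ((a^2 * d^2 - b^2 * c^2)^2 / (a^2 * d^2 + b^2 * c^2))
    + (a^2 - b^2) * (c^2 - d^2) <= (a * c - b * d)^2.
Proof.
  assert (HS : 0 < a^2 * d^2 + b^2 * c^2) by (apply Rplus_lt_0_compat; apply Rmult_lt_0_compat; apply pow_lt; lra).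
  assert (E : (a * c - b * d)^2 - ((1/2) * ((a^2 * d^2 - b^2 * c^2)^2 / (a^2 * d^2 + b^2 * c^2))
    + (a^2 - b^2) * (c^2 - d^2)) = (a*d - b*c)^4 / (2 * (a^2 * d^2 + b^2 * c^2))).
  { field. lra. }
  assert (0 <= (a*d - b*c)^4 / (2 * (a^2 * d^2 + b^2 * c^2))).
  { unfold Rdiv; apply Rmult_le_pos; [| left; apply Rinv_0_lt_compat; lra].
    replace ((a*d-b*c)^4) with (((a*d-b*c)^2)^2) by ring. apply pow2_ge_0. }
  lra.
Qed.
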